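(* Let $T$ be a linear transformation of a finite-dimensional real vector space $W$, and assume $W$ splits as a direct sum of (real) eigenspaces of $T$ with eigenvalues $\neq\pm1$. Let $W^+\subseteq W$ be a subspace having zero intersection with the contracting subspace of $W$ determined by $T$, and fix a norm $\|\cdot\|$ on $W$. Then there is a constant $c<1$ depending only on $T$, and a constant $A$ depending only on $T$, $W^+$ and $\|\cdot\|$, such that for all $w^+\in W^+$ and all integers $0\leq j\leq k$, $$\|T^jw^+\|\leq A\,c^{k-j}\|T^kw^+\|.$$
   Context: The contracting subspace of $W$ determined by $T$ is the sum of the eigenspaces of $T$ whose eigenvalues have absolute value $<1$. *)

(* Defs.v *)
(* W = 'rV[R]_n (row vectors), T acts by v |-> v *m T. *)
From HB Require Import structures.
From mathcomp Require Import all_boot all_order all_algebra.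
From mathcomp Require Import reals.
Set Implicit Arguments. Unset Strict Implicit. Unset Printing Implicit Defensive.
Import Order.TTheory GRing.Theory Num.Theory.
Local Open Scope ring_scope.

Definition is_norm (R : realType) (n : nat) (N : 'rV[R]_n -> R) : Prop :=
  [/\ (forall v, N v = 0 -> v = 0),
      (forall (a : R) v, N (a *: v) = `|a| * N v) &
      (forall u v, N (u + v) <= N u + N v)].

Definition eigen_split (R : realType) (n : nat) (T : 'M[R]_n) (s : seq R) : Prop :=
  (\sum_(a <- s) eigenspace T a :=: 1%:M)%MS.

Definition in_contracting (R : realType) (n : nat) (T : 'M[R]_n) (v : 'rV[R]_n) : Prop :=
  exists s : seq R, all (fun a => `|a| < 1) s /\
    (v <= \sum_(a <- s) eigenspace T a)%MS.

(* Main.v *)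
Require Import Defs.
From HB Require Import structures.
From mathcomp Require Import all_boot all_order all_algebra.
From mathcomp Require Import reals ring lra.
From mathcomp Require Import boolp classical_sets topology normedtype derive matrix_normedtype.
Import Order.TTheory GRing.Theory Num.Theory.
Import numFieldNormedType.Exports.
Set Implicit Arguments. Unset Strict Implicit. Unset Printing Implicit Defensive.
Local Open Scope ring_scope.
Definition Lm (R : realType) n (T : 'M[R]_n) (u : seq R) (a : R) : 'M[R]_n :=
  \prod_(b <- u | b != a) ((a - b)^-1 *: (T - b%:M)).

Lemma Lm_eig (R : realType) n (T : 'M[R]_n) (u : seq R) (a c : R) (v : 'rV[R]_n) :
  v *m T = c *: v ->
  v *m Lm T u a = (\prod_(b <- u | b != a) ((a - b)^-1 * (c - b))) *: v.
Proof.
move=> vT; rewrite /Lm; elim: u => [|b u IH]; first by rewrite !big_nil scale1r mulmx1.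
rewrite !big_cons; case: (b != a) => //.
rewrite -mulmxE mulmxA -scalemxAr mulmxBr vT mul_mx_scalar -scalerBl scalerA.
by rewrite -scalemxAl IH scalerA mulrC.
Qed.

Lemma ext_sum (R : realType) n (T : 'M[R]_n) (s : seq R) (M1 M2 : 'M[R]_n) :
  (forall a (v : 'rV_n), a \in s -> (v <= eigenspace T a)%MS -> v *m M1 = v *m M2) ->
  forall v : 'rV_n, (v <= \sum_(a <- s) eigenspace T a)%MS -> v *m M1 = v *m M2.
Proof.
elim: s => [|a s IH] H v.
  by rewrite big_nil submx0 => /eqP ->; rewrite !mul0mx.
rewrite big_cons => /sub_addsmxP [[u1 u2] /= ->].
rewrite !mulmxDl (H a) ?mem_head ?submxMl //; congr (_ + _).
apply: IH; last exact: submxMl.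
by move=> b w bs; apply: H; rewrite inE bs orbT.
Qed.

Lemma ext_mx (R : realType) n (T : 'M[R]_n) (s : seq R) (M1 M2 : 'M[R]_n) :
  eigen_split T s ->
  (forall a (v : 'rV_n), a \in s -> (v <= eigenspace T a)%MS -> v *m M1 = v *m M2) ->
  M1 = M2.
Proof.
move=> hs H; apply/row_matrixP => i.
rewrite -[M1]mul1mx -[M2]mul1mx !row_mul; apply: (ext_sum H).
by rewrite (((hs : eqmx _ _).2 _ _).2) submx1.
Qed.

Lemma Lm_vec (R : realType) n (T : 'M[R]_n) (u : seq R) (a c : R) (v : 'rV[R]_n) :
  c \in u -> (v <= eigenspace T c)%MS ->
  v *m Lm T u a = if c == a then v else 0.
Proof.
move=> cu /eigenspaceP vT; rewrite (Lm_eig u a vT); case: eqP => [->|ca].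
  rewrite big1_seq ?scale1r // => b /andP [ba _].
  by rewrite mulVf // subr_eq0 eq_sym.
suff /eqP -> : \prod_(b <- u | b != a) ((a - b)^-1 * (c - b)) == 0 by rewrite scale0r.
rewrite prodf_seq_eq0; apply/hasP; exists c => //.
by rewrite subrr mulr0 eqxx andbT; apply/eqP.
Qed.

Lemma Lm_T (R : realType) n (T : 'M[R]_n) (s : seq R) a :
  eigen_split T s -> Lm T (undup s) a *m T = a *: Lm T (undup s) a.
Proof.
move=> hs; apply: (ext_mx hs) => c v cs vE.
have cu : c \in undup s by rewrite mem_undup.
rewrite mulmxA -scalemxAr (Lm_vec a cu vE).
case: eqP => [ca|_]; last by rewrite mul0mx scaler0.
rewrite -ca.
by apply/eigenspaceP.
Qed.

Lemma T_Lm (R : realType) n (T : 'M[R]_n) (s : seq R) a :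
  eigen_split T s -> T *m Lm T (undup s) a = a *: Lm T (undup s) a.
Proof.
move=> hs; apply: (ext_mx hs) => c v cs vE.
have cu : c \in undup s by rewrite mem_undup.
rewrite mulmxA -scalemxAr (Lm_vec a cu vE).
have /eigenspaceP -> := vE.
rewrite -scalemxAl (Lm_vec a cu vE).
by case: eqP => [->|_]; rewrite ?scaler0.
Qed.

Lemma TX_Lm (R : realType) n (T : 'M[R]_n) (s : seq R) a k :
  eigen_split T s -> T ^+ k *m Lm T (undup s) a = a ^+ k *: Lm T (undup s) a.
Proof.
move=> hs; elim: k => [|k IH]; first by rewrite expr0 expr0 scale1r mul1mx.
rewrite exprS -mulmxE -mulmxA IH -scalemxAr T_Lm // scalerA.
by rewrite -exprSr exprS.
Qed.

Lemma sum_Lm (R : realType) n (T : 'M[R]_n) (s : seq R) :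
  eigen_split T s -> \sum_(a <- undup s) Lm T (undup s) a = 1%:M.
Proof.
move=> hs; apply: (ext_mx hs) => c v cs vE.
have cu : c \in undup s by rewrite mem_undup.
rewrite mulmx_sumr mulmx1 (bigD1_seq c cu (undup_uniq s)) /= (Lm_vec c cu vE) eqxx.
rewrite big1_seq ?addr0 // => a /andP [ac _].
by rewrite (Lm_vec a cu vE) eq_sym (negbTE ac).
Qed.

Definition P2 (R : realType) n (T : 'M[R]_n) (s : seq R) :=
  \sum_(a <- undup s | ~~ (`|a| < 1)) Lm T (undup s) a.

Lemma P2_contr (R : realType) n (T : 'M[R]_n) (s : seq R) (w : 'rV[R]_n) :
  eigen_split T s -> w *m P2 T s = 0 -> in_contracting T w.
Proof.
move=> hs wP.
have -> : w = \sum_(a <- undup s | `|a| < 1) w *m Lm T (undup s) a.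
  rewrite -mulmx_sumr -[LHS]mulmx1 -(sum_Lm hs) (bigID (fun a => `|a| < 1)) /=.
  by rewrite mulmxDr -/(P2 T s) wP addr0.
exists [seq a <- undup s | `|a| < 1]; split; first exact: filter_all.
rewrite big_filter.
elim/big_rec2: _ => [|a y1 y2 ha Hy]; first exact: sub0mx.
apply: addmx_sub_adds => //; apply/eigenspaceP.
by rewrite -mulmxA Lm_T // scalemxAr.
Qed.
Definition seminorm (R : realType) n (f : 'rV[R]_n -> R) :=
  (forall (a : R) v, f (a *: v) = `|a| * f v) /\ (forall u v, f (u + v) <= f u + f v).

Lemma sn0 (R : realType) n (f : 'rV[R]_n -> R) : seminorm f -> f 0 = 0.
Proof. by move=> [hZ _]; rewrite -(scale0r 0) hZ normr0 mul0r. Qed.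

Lemma snN (R : realType) n (f : 'rV[R]_n -> R) v : seminorm f -> f (- v) = f v.
Proof. by move=> [hZ _]; rewrite -scaleN1r hZ normrN normr1 mul1r. Qed.

Lemma sn_ge0 (R : realType) n (f : 'rV[R]_n -> R) v : seminorm f -> 0 <= f v.
Proof.
move=> hf; have := hf.2 v (- v); rewrite subrr sn0 // snN // => h.
by rewrite -(@pmulr_rge0 _ 2) // mulr2n mulrDl !mul1r.
Qed.

Lemma sn_sum (R : realType) n (f : 'rV[R]_n -> R) I (r : seq I) (P : pred I) F :
  seminorm f -> f (\sum_(i <- r | P i) F i) <= \sum_(i <- r | P i) f (F i).
Proof.
move=> hf; elim/big_rec2: _ => [|i y1 y2 _ h]; first by rewrite sn0.
by apply: le_trans (hf.2 _ _) _; rewrite lerD2l.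
Qed.

Lemma coord_le (R : realType) n (v : 'rV[R]_n) i : `|v 0 i| <= `|v|.
Proof.
by rewrite [leRHS]/Num.norm /= mx_normrE; apply/bigmax_geP; right => /=; exists (0, i).
Qed.

Lemma snUB (R : realType) n (f : 'rV[R]_n -> R) : seminorm f ->
  exists M, 0 <= M /\ forall v, f v <= M * `|v|.
Proof.
move=> hf; exists (\sum_(j < n) f 'e_j); split.
  by apply: sumr_ge0 => j _; apply: sn_ge0.
move=> v; rewrite {1}(row_sum_delta v); apply: le_trans (sn_sum _ _ _ hf) _.
rewrite mulr_suml; apply: ler_sum => j _; rewrite hf.1 mulrC.
by apply: ler_wpM2l; [apply: sn_ge0 | apply: coord_le].
Qed.

Lemma sn_cont (R : realType) n (f : 'rV[R]_n -> R) : seminorm f -> continuous f.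
Proof.
move=> hf; have [M [M0 hM]] := snUB hf.
have hd x y : `|f x - f y| <= (M + 1) * `|x - y|.
  apply: le_trans (_ : f (x - y) <= _).
    have h1 := hf.2 (x - y) y; rewrite subrK in h1.
    have h2 := hf.2 (y - x) x; rewrite subrK -opprB snN // in h2.
    by rewrite ler_norml; apply/andP; split; lra.
  apply: le_trans (hM _) _; apply: ler_wpM2r => //; rewrite lerDl //.
move=> x; apply/(@cvgrPdist_lt _ _ _ (nbhs x) (nbhs_filter x)) => e e0.
have d0 : 0 < e / (M + 1) by rewrite divr_gt0 // ltr_wpDl.
apply: filterS (nbhsx_ballx x _ d0) => y; rewrite -ball_normE /= => hy; apply: le_lt_trans (hd _ _) _.
by rewrite -ltr_pdivlMl ?ltr_wpDl // mulrC.
Qed.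

Lemma snLB (R : realType) n (f : 'rV[R]_n -> R) : seminorm f ->
  (forall v, f v = 0 -> v = 0) -> exists m, 0 < m /\ forall v, `|v| <= m * f v.
Proof.
move=> hf hdef.
have [[v0 v0n]|nv] := pselect (exists v : 'rV[R]_n, v != 0); last first.
  exists 1; split => // v; have -> : v = 0.
    by apply/eqP; apply: contra_notT nv => ?; exists v.
  by rewrite normr0 sn0 // mulr0.
pose S := [set v : 'rV[R]_n | `|v| = 1]%classic.
have S0 : (S !=set0)%classic.
  exists (`|v0|^-1 *: v0); rewrite /S /= normrZ normfV normr_id mulVf //.
  by rewrite normr_eq0.
have cS : compact S.
  apply: bounded_closed_compact.
    exists 1; split; first exact: num_real.
    by move=> M M1 x /= ->; apply: ltW.
  have -> : S = (Num.norm @^-1` [set x : R | x = 1])%classic by [].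
  apply: preimage_closed; last exact: closed_eq.
  by move=> x _; apply: norm_continuous.
have [c cS' hc] := EVT_min_rV S0 cS (continuous_subspaceT (sn_cont hf)).
have c1 : `|c| = 1 by move: cS'; rewrite inE.
have fc0 : 0 < f c.
  rewrite lt_def sn_ge0 // andbT; apply/eqP => /hdef c0.
  by move: c1; rewrite c0 normr0 => /eqP; rewrite eq_sym oner_eq0.
exists (f c)^-1; split; first by rewrite invr_gt0.
move=> v; have [->|vn] := eqVneq v 0; first by rewrite normr0 sn0 // mulr0.
have vp : 0 < `|v| by rewrite normr_gt0.
have := hc (`|v|^-1 *: v); rewrite hf.1 normfV normr_id.
have -> : (`|v|^-1 *: v) \in S.
  by rewrite inE /S /= normrZ normfV normr_id mulVf // gt_eqF.
move=> /(_ isT) h.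
rewrite ler_pdivlMl // in h.
by rewrite ler_pdivlMl // mulrC.
Qed.

Lemma norm_sn (R : realType) n (N : 'rV[R]_n -> R) : is_norm N -> seminorm N.
Proof. by case=> _ h1 h2; split. Qed.

Lemma bound_mx (R : realType) n (N : 'rV[R]_n -> R) (C : 'M[R]_n) : is_norm N ->
  exists K, 0 <= K /\ forall x, N (x *m C) <= K * N x.
Proof.
move=> hN; have hs := norm_sn hN.
have hs' : seminorm (fun x => N (x *m C)).
  split; first by move=> a v; rewrite -scalemxAl hs.1.
  by move=> u v; rewrite mulmxDl hs.2.
have [M [M0 hM]] := snUB hs'.
have [m [m0 hm]] := snLB hs (let: And3 h _ _ := hN in h).
exists (M * m); split; first by rewrite mulr_ge0 // ltW.
move=> x; apply: le_trans (hM x) _; rewrite -mulrA; apply: ler_wpM2l => //.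
Qed.

Lemma bound_list (R : realType) n (N : 'rV[R]_n -> R) (l : seq R) (F : R -> 'M[R]_n) :
  is_norm N -> exists K, 0 <= K /\ forall a, a \in l -> forall x, N (x *m F a) <= K * N x.
Proof.
move=> hN; elim: l => [|a l [K [K0 hK]]]; first by exists 0; split.
have [Ka [Ka0 hKa]] := bound_mx (F a) hN.
exists (Ka + K); split; first by rewrite addr_ge0.
move=> b; rewrite inE => /orP [/eqP ->|bl] x.
  apply: le_trans (hKa x) _; rewrite mulrDl lerDl mulr_ge0 // sn_ge0 //.
  exact: norm_sn.
apply: le_trans (hK b bl x) _; rewrite mulrDl lerDr mulr_ge0 // sn_ge0 //.
exact: norm_sn.
Qed.

Lemma sum_bound (R : realType) (l : seq R) (P : pred R) (h : R -> R) X :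
  0 <= X -> (forall a, a \in l -> P a -> h a <= X) ->
  \sum_(a <- l | P a) h a <= (size l)%:R * X.
Proof.
move=> X0; elim: l => [|a l IH] H; first by rewrite big_nil mul0r.
rewrite big_cons /= -addn1 natrD mulrDl mul1r addrC.
have IH' : \sum_(a <- l | P a) h a <= (size l)%:R * X.
  by apply: IH => b bl; apply: H; rewrite inE bl orbT.
case: (P a) (H a (mem_head _ _)) => [/(_ isT) ha|_].
  by rewrite lerD.
by apply: le_trans IH' _; rewrite lerDl.
Qed.

Lemma inj_bound (R : realType) n (T : 'M[R]_n) (s : seq R) (Wp : 'M[R]_n)
    (N : 'rV[R]_n -> R) :
  eigen_split T s -> is_norm N ->
  (forall v : 'rV[R]_n, (v <= Wp)%MS -> in_contracting T v -> v = 0) ->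
  exists B, 0 <= B /\ forall w, (w <= Wp)%MS -> N w <= B * N (w *m P2 T s).
Proof.
move=> hs hN hWp; have hsn := norm_sn hN.
pose f (v : 'rV[R]_n) := `|v *m P2 T s| + `|v *m cokermx Wp|.
have hf : seminorm f.
  split; first by move=> a v; rewrite /f -!scalemxAl !normrZ mulrDr.
  move=> x y; rewrite /f !mulmxDl.
  have := ler_normD (x *m P2 T s) (y *m P2 T s).
  have := ler_normD (x *m cokermx Wp) (y *m cokermx Wp).
  lra.
have hdef v : f v = 0 -> v = 0.
  move/eqP; rewrite /f paddr_eq0 // !normr_eq0 => /andP [/eqP h1 h2].
  apply: hWp; first by rewrite submxE.
  exact: (P2_contr hs h1).
have [mf [mf0 hmf]] := snLB hf hdef.
have [M [M0 hM]] := snUB hsn.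
have [mN [mN0 hmN]] := snLB hsn (let: And3 h _ _ := hN in h).
exists (M * mf * mN); split; first by rewrite !mulr_ge0 // ltW.
move=> w hw; apply: le_trans (hM w) _.
rewrite -!mulrA; apply: ler_wpM2l => //.
apply: le_trans (hmf w) _; apply: ler_wpM2l; first exact: ltW.
move: hw; rewrite submxE /f => /eqP ->; rewrite normr0 addr0.
exact: hmN.
Qed.

Definition gc (R : realType) (a : R) := if `|a| < 1 then `|a| else `|a|^-1.

Lemma cmax_ge0 (R : realType) (u : seq R) : 0 <= \big[Num.max/0]_(a <- u) gc a.
Proof.
elim: u => [|a u IH]; first by rewrite big_nil.
by rewrite big_cons le_max IH orbT.
Qed.

Lemma cmax_ub (R : realType) (u : seq R) a : a \in u -> gc a <= \big[Num.max/0]_(a <- u) gc a.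
Proof.
elim: u => [|b u IH] //; rewrite inE big_cons le_max => /orP [/eqP ->|au].
  by rewrite lexx.
by rewrite IH ?orbT.
Qed.

Lemma cmax_lt1 (R : realType) (u : seq R) : (forall a, a \in u -> `|a| != 1) ->
  \big[Num.max/0]_(a <- u) gc a < 1.
Proof.
elim: u => [|a u IH] H; first by rewrite big_nil.
rewrite big_cons gt_max IH ?andbT; last by move=> b bu; apply: H; rewrite inE bu orbT.
rewrite /gc; case: ifP => // /negbT; rewrite -leNgt le_eqVlt eq_sym.
rewrite (negbTE (H a (mem_head _ _))) /= => ha.
by rewrite invf_lt1 // (lt_trans _ ha).
Qed.

Theorem lemma8p3 (R : realType) (n : nat) (T : 'M[R]_n)
  (hsplit : exists s : seq R,
      all (fun a => (a != 1) && (a != -1)) s /\ eigen_split T s) :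
  exists c : R, 0 <= c /\ c < 1 /\
    forall (Wp : 'M[R]_n) (N : 'rV[R]_n -> R),
      is_norm N ->
      (forall v : 'rV[R]_n, (v <= Wp)%MS -> in_contracting T v -> v = 0) ->
      exists A : R,
        forall (w : 'rV[R]_n) (j k : nat), (w <= Wp)%MS -> (j <= k)%N ->
          N (w *m T ^+ j) <= A * c ^+ (k - j) * N (w *m T ^+ k).
Proof.
case: hsplit => s [hne hs].
have hu1 a : a \in undup s -> `|a| != 1.
  rewrite mem_undup => /(allP hne) /andP [h1 h2].
  by rewrite eqr_norml (negbTE h1) (negbTE h2).
set u := undup s in hu1 *.
set c := \big[Num.max/0]_(a <- u) gc a.
have c0 : 0 <= c := cmax_ge0 u.
have c1 : c < 1 := cmax_lt1 hu1.
exists c; split => //; split => //.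
move=> Wp N hN hWp.
have hsn := norm_sn hN.
have [K [K0 hK]] := bound_list u (Lm T u) hN.
have [B [B0 hB]] := inj_bound hs hN hWp.
pose D := K + K * B * ((size u)%:R * K).
exists ((size u)%:R * D).
move=> w j k hw hjk.
set y := w *m T ^+ k.
have Ny0 : 0 <= N y := sn_ge0 _ hsn.
have hLa i a : w *m T ^+ i *m Lm T u a = a ^+ i *: (w *m Lm T u a).
  by rewrite -mulmxA TX_Lm // -scalemxAr.
have gy a : a \in u -> `|a| ^+ k * N (w *m Lm T u a) <= K * N y.
  by move=> au; rewrite -normrX -hsn.1 -hLa; apply: hK.
have Gge0 a : 0 <= N (w *m Lm T u a) := sn_ge0 _ hsn.
have exp_b a i : a \in u -> ~~ (`|a| < 1) -> (i <= k)%N ->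
    `|a| ^+ i * N (w *m Lm T u a) <= c ^+ (k - i) * (K * N y).
  move=> au ha hik.
  have a1 : 1 < `|a| by rewrite lt_neqAle eq_sym hu1 // leNgt.
  have a0 : 0 < `|a| by apply: lt_trans a1.
  have ca : 1 <= c * `|a|.
    have := cmax_ub au; rewrite /gc (negbTE ha) -div1r ler_pdivrMr //.
  set G := N (w *m Lm T u a).
  apply: (@le_trans _ _ ((c * `|a|) ^+ (k - i) * (`|a| ^+ i * G))).
    by apply: ler_peMl; [rewrite mulr_ge0 ?exprn_ge0 ?normr_ge0 ?Gge0 | apply: exprn_ege1].
  have ek : `|a| ^+ k = `|a| ^+ (k - i) * `|a| ^+ i by rewrite -exprD subnK.
  have -> : (c * `|a|) ^+ (k - i) * (`|a| ^+ i * G) = c ^+ (k - i) * (`|a| ^+ k * G).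
    by rewrite ek exprMn; ring.
  by apply: ler_wpM2l; [apply: exprn_ge0 | apply: gy].
have contr_b a : a \in u -> `|a| < 1 ->
    `|a| ^+ j * N (w *m Lm T u a) <= c ^+ (k - j) * (K * B * ((size u)%:R * K) * N y).
  move=> au ha.
  have ac : `|a| <= c by have := cmax_ub au; rewrite /gc ha.
  have hP2 : N (w *m P2 T s) <= (size u)%:R * (c ^+ k * (K * N y)).
    rewrite /P2 -/u mulmx_sumr; apply: le_trans (sn_sum _ _ _ hsn) _.
    apply: sum_bound; first by rewrite !mulr_ge0 // exprn_ge0.
    move=> b bu hb; have := exp_b b 0%N bu hb (leq0n k).
    by rewrite expr0 mul1r subn0.
  have h1 : N (w *m Lm T u a) <= K * (B * ((size u)%:R * (c ^+ k * (K * N y)))).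
    apply: le_trans (hK a au w) _; apply: ler_wpM2l => //.
    apply: le_trans (hB w hw) _; apply: ler_wpM2l => //.
  have h2 : `|a| ^+ j <= c ^+ j by apply: lerXn2r => //; rewrite nnegrE.
  have ckj : c ^+ k = c ^+ (k - j) * c ^+ j by rewrite -exprD subnK.
  have cj1 : c ^+ j <= 1 by apply: exprn_ile1; [ | apply: ltW].
  have cj0 : 0 <= c ^+ j by apply: exprn_ge0.
  have ckj0 : 0 <= c ^+ (k - j) by apply: exprn_ge0.
  set X := K * B * ((size u)%:R * K) * N y.
  have X0 : 0 <= X by rewrite /X !mulr_ge0.
  set Ga := N (w *m Lm T u a).
  have e1 : `|a| ^+ j * Ga <= c ^+ j * Ga by apply: ler_wpM2r; [exact: Gge0 | exact: h2].
  have e2 : c ^+ j * Ga <= c ^+ j * (K * (B * ((size u)%:R * (c ^+ k * (K * N y))))).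
    by apply: ler_wpM2l; [exact: cj0 | exact: h1].
  have e4 : K * (B * ((size u)%:R * (c ^+ k * (K * N y)))) = c ^+ (k - j) * c ^+ j * X.
    by rewrite ckj /X; ring.
  have e3 : 0 <= (1 - c ^+ j * c ^+ j) * (c ^+ (k - j) * X).
    apply: mulr_ge0; last exact: mulr_ge0.
    by rewrite subr_ge0; apply: mulr_ile1.
  nra.
have -> : w *m T ^+ j = \sum_(a <- u) (w *m T ^+ j *m Lm T u a).
  by rewrite -mulmx_sumr sum_Lm // mulmx1.
apply: le_trans (sn_sum _ _ _ hsn) _.
have -> : (size u)%:R * D * c ^+ (k - j) * N y = (size u)%:R * (c ^+ (k - j) * (D * N y)).
  by ring.
apply: (@sum_bound _ u xpredT); first by rewrite !mulr_ge0 // ?exprn_ge0 // /D addr_ge0 // !mulr_ge0.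
move=> a au _; rewrite hLa hsn.1 normrX.
have hD1 : K * N y <= D * N y.
  by apply: ler_wpM2r => //; rewrite /D lerDl !mulr_ge0.
have hD2 : K * B * ((size u)%:R * K) * N y <= D * N y.
  by apply: ler_wpM2r => //; rewrite /D lerDr.
have ckj0 : 0 <= c ^+ (k - j) by apply: exprn_ge0.
case: (boolP (`|a| < 1)) => ha.
  apply: le_trans (contr_b a au ha) _; exact: ler_wpM2l.
apply: le_trans (exp_b a j au ha hjk) _; exact: ler_wpM2l.
Qed.
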